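(* Let $A,B,C$ be finite-dimensional quantum systems and let $\Lambda^{C\to B}$ be a quantum channel (completely positive trace-preserving linear map). (i) If $\Lambda^{C\to AB}$ is an incoherent extension of $\Lambda^{C\to B}$, then for every measurement assemblage $\{M^A_{a|x}\}_{a,x}$ on $A$ the induced channel assemblage $\{\Lambda^{C\to B}_{a|x}\}_{a,x}$, defined by $\Lambda^{C\to B}_{a|x}[X]=\mathrm{Tr}_A\big(M^A_{a|x}\,\Lambda^{C\to AB}[X]\big)$, is unsteerable. (ii) Conversely, for every unsteerable channel assemblage $\{\Lambda_{a|x}\}_{a,x}$ for $\Lambda^{C\to B}$ there exist a system $A$, an incoherent extension $\Lambda^{C\to AB}$ of $\Lambda^{C\to B}$ and a measurement assemblage $\{M^A_{a|x}\}_{a,x}$ on $A$ such that $\Lambda_{a|x}[X]=\mathrm{Tr}_A\big(M^A_{a|x}\,\Lambda^{C\to AB}[X]\big)$ for all $a,x$ and all operators $X$ on $C$.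
   Context: A channel extension of $\Lambda^{C\to B}$ is a channel $\Lambda^{C\to AB}$ with $\mathrm{Tr}_A\circ\Lambda^{C\to AB}=\Lambda^{C\to B}$. An instrument is a collection $\{\Lambda_\lambda\}_\lambda$ of completely positive maps whose sum is a channel (each $\Lambda_\lambda$ is then a completely positive trace-non-increasing map, a subchannel). A channel extension $\Lambda^{C\to AB}$ of $\Lambda^{C\to B}$ is incoherent if there exist an instrument $\{\Lambda^{C\to B}_\lambda\}_\lambda$ (necessarily summing to $\Lambda^{C\to B}$) and unit-trace density operators $\{\sigma^A_\lambda\}_\lambda$ on $A$ such that $\Lambda^{C\to AB}=\sum_\lambda \Lambda^{C\to B}_\lambda\otimes\sigma^A_\lambda$, i.e. $\Lambda^{C\to AB}[X]=\sum_\lambda \Lambda^{C\to B}_\lambda[X]\otimes\sigma^A_\lambda$. A measurement assemblage on $A$ is a collection $\{M^A_{a|x}\}_{a,x}$ such that for each $x$, $\{M^A_{a|x}\}_a$ is a POVM ($M^A_{a|x}\ge 0$, $\sum_a M^A_{a|x}=\mathbb{1}$). A channel assemblage for $\Lambda^{C\to B}$ is a collection $\{\Lambda_{a|x}\}_{a,x}$ of completely positive maps $C\to B$ such that $\sum_a\Lambda_{a|x}=\Lambda^{C\to B}$ for every $x$. It is unsteerable if there exist an instrument $\{\Lambda_\lambda\}_\lambda$ and conditional probability distributions $p(a|x,\lambda)$ with $\Lambda_{a|x}=\sum_\lambda p(a|x,\lambda)\Lambda_\lambda$ for all $a,x$. *)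

(* Defs.v *)
From HB Require Import structures.
From mathcomp Require Import all_boot all_order all_algebra.
From mathcomp Require Import mxtens.
Set Implicit Arguments. Unset Strict Implicit. Unset Printing Implicit Defensive.
Import Order.TTheory GRing.Theory Num.Theory.
Local Open Scope ring_scope.

(* Quantum systems of dimension d are modelled by 'M[C]_d, C a numeric
   algebraically closed field (e.g. the complex numbers).
   Composite systems X (x) Y are 'M[C]_(dX * dY) with the index convention of
   mxtens (mxtens_index (x, y)); tensor product of operators is [tensmx]. *)

Section Quantum.
Variable C : numClosedFieldType.

Definition psd n (A : 'M[C]_n) : Prop :=
  forall v : 'cV[C]_n, 0 <= ((map_mx Num.conj v)^T *m A *m v) 0 0.

Definition density n (rho : 'M[C]_n) : Prop := psd rho /\ \tr rho = 1.

Definition ptrA dA dB (Y : 'M[C]_(dA * dB)) : 'M[C]_dB :=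
  \matrix_(i, j) \sum_(a < dA) Y (mxtens_index (a, i)) (mxtens_index (a, j)).

(* the map (f (x) id_k) : 'M_(dC*k) -> 'M_(dB*k) *)
Definition ampl dC dB k (f : 'M[C]_dC -> 'M[C]_dB) (X : 'M[C]_(dC * k))
  : 'M[C]_(dB * k) :=
  let blk (l l' : 'I_k) : 'M[C]_dC :=
    \matrix_(c, c') X (mxtens_index (c, l)) (mxtens_index (c', l')) in
  \matrix_(i, j) f (blk (mxtens_unindex i).2 (mxtens_unindex j).2)
                   (mxtens_unindex i).1 (mxtens_unindex j).1.

Definition CP dC dB (f : 'M[C]_dC -> 'M[C]_dB) : Prop :=
  forall k (X : 'M[C]_(dC * k)), psd X -> psd (ampl f X).

Definition CPmap dC dB (f : 'M[C]_dC -> 'M[C]_dB) : Prop :=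
  linear f /\ CP f.

Definition channel dC dB (f : 'M[C]_dC -> 'M[C]_dB) : Prop :=
  CPmap f /\ forall X, \tr (f X) = \tr X.

Definition instrument dC dB m (L : 'I_m -> 'M[C]_dC -> 'M[C]_dB) : Prop :=
  (forall l, CPmap (L l)) /\ channel (fun X => \sum_(l < m) L l X).

Definition channel_extension dC dA dB (Lab : 'M[C]_dC -> 'M[C]_(dA * dB))
  (Lam : 'M[C]_dC -> 'M[C]_dB) : Prop :=
  channel Lab /\ forall X, ptrA (Lab X) = Lam X.

Definition incoherent_extension dC dA dB (Lab : 'M[C]_dC -> 'M[C]_(dA * dB))
  (Lam : 'M[C]_dC -> 'M[C]_dB) : Prop :=
  channel_extension Lab Lam /\
  exists m (L : 'I_m -> 'M[C]_dC -> 'M[C]_dB) (sig : 'I_m -> 'M[C]_dA),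
    [/\ instrument L, forall l, density (sig l) &
        forall X, Lab X = \sum_(l < m) (sig l *t L l X)].

Definition meas_assemblage dA na nx (M : 'I_na -> 'I_nx -> 'M[C]_dA) : Prop :=
  (forall a x, psd (M a x)) /\ (forall x, \sum_(a < na) M a x = 1%:M).

Definition channel_assemblage dC dB na nx (Lam : 'M[C]_dC -> 'M[C]_dB)
  (La : 'I_na -> 'I_nx -> 'M[C]_dC -> 'M[C]_dB) : Prop :=
  (forall a x, CPmap (La a x)) /\
  (forall x X, \sum_(a < na) La a x X = Lam X).

Definition unsteerable dC dB na nx
  (La : 'I_na -> 'I_nx -> 'M[C]_dC -> 'M[C]_dB) : Prop :=
  exists m (L : 'I_m -> 'M[C]_dC -> 'M[C]_dB) (p : 'I_na -> 'I_nx -> 'I_m -> C),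
    [/\ instrument L,
        forall a x l, 0 <= p a x l,
        forall x l, \sum_(a < na) p a x l = 1 &
        forall a x X, La a x X = \sum_(l < m) p a x l *: L l X].

Definition induced dC dA dB na nx (M : 'I_na -> 'I_nx -> 'M[C]_dA)
  (Lab : 'M[C]_dC -> 'M[C]_(dA * dB)) (a : 'I_na) (x : 'I_nx)
  (X : 'M[C]_dC) : 'M[C]_dB :=
  ptrA ((M a x *t (1%:M : 'M[C]_dB)) *m Lab X).

End Quantum.

(* Main.v *)
Require Import Defs.
From HB Require Import structures.
From mathcomp Require Import all_boot all_order all_algebra.
From mathcomp Require Import mxtens spectral sesquilinear ring.
From Stdlib Require Import FunctionalExtensionality.
Import GRing.Theory Num.Theory.
Local Open Scope ring_scope.
Set Implicit Arguments. Unset Strict Implicit.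

Section Q.
Variable C : numClosedFieldType.

Definition adj m n (P : 'M[C]_(m,n)) : 'M[C]_(n,m) := map_mx Num.conj P^T.

Lemma adjK m n (P : 'M[C]_(m,n)) : adj (adj P) = P.
Proof. by apply/matrixP=> i j; rewrite !mxE conjCK. Qed.

Lemma adj_mul m n p (A : 'M[C]_(m,n)) (B : 'M[C]_(n,p)) : adj (A *m B) = adj B *m adj A.
Proof. by rewrite /adj trmx_mul map_mxM. Qed.

Lemma adjD m n (A B : 'M[C]_(m,n)) : adj (A + B) = adj A + adj B.
Proof. by apply/matrixP=> i j; rewrite !mxE rmorphD. Qed.

Lemma adjZ m n c (A : 'M[C]_(m,n)) : adj (c *: A) = c^* *: adj A.
Proof. by apply/matrixP=> i j; rewrite !mxE rmorphM. Qed.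

Lemma psdE n (A : 'M[C]_n) : psd A <-> forall v : 'cV[C]_n, 0 <= (adj v *m A *m v) 0 0.
Proof. by rewrite /psd /adj; split=> H v; move: (H v); rewrite map_trmx. Qed.

Lemma psd_conj n k (A : 'M[C]_n) (P : 'M[C]_(n,k)) : psd A -> psd (adj P *m A *m P).
Proof.
move=> /psdE H; apply/psdE => v; have := H (P *m v).
by rewrite adj_mul !mulmxA.
Qed.

Lemma adj_delta n (i : 'I_n) : adj (delta_mx i 0 : 'cV[C]_n) = delta_mx 0 i.
Proof. by apply/matrixP=> a b; rewrite !mxE rmorph_nat andbC. Qed.

Lemma delta_entryM n (A : 'M[C]_n) i j : ((delta_mx 0 i : 'rV[C]_n) *m A *m (delta_mx j 0 : 'cV[C]_n)) = (A i j)%:M.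
Proof. by apply/matrixP=> a b; rewrite !ord1 -rowE -colE !mxE. Qed.

Lemma delta_entry n (A : 'M[C]_n) i j : ((delta_mx 0 i : 'rV[C]_n) *m A *m (delta_mx j 0 : 'cV[C]_n)) 0 0 = A i j.
Proof. by rewrite -rowE -colE !mxE. Qed.

Lemma psd_diag n (A : 'M[C]_n) i : psd A -> 0 <= A i i.
Proof. by move=> /psdE /(_ (delta_mx i 0)); rewrite adj_delta delta_entry. Qed.

Lemma qform2 n (A : 'M[C]_n) i j c :
  let v : 'cV[C]_n := delta_mx i 0 + c *: delta_mx j 0 in
  (adj v *m A *m v) 0 0
  = A i i + c * A i j + c^* * A j i + c^* * c * A j j.
Proof.
rewrite /= adjD adjZ !adj_delta !mulmxDl !mulmxDr.
rewrite -!scalemxAr -!scalemxAl !delta_entryM !mxE /= !mulr1n; ring.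
Qed.

Lemma psd_herm n (A : 'M[C]_n) i j : psd A -> (A j i)^* = A i j.
Proof.
move=> H; have /psdE H' := H.
have Ri k : A k k \is Num.real by apply: ger0_real; exact: psd_diag.
have R1 := ger0_real (H' (delta_mx i 0 + 1 *: delta_mx j 0)).
have R2 := ger0_real (H' (delta_mx i 0 + 'i *: delta_mx j 0)).
rewrite qform2 in R1; rewrite qform2 in R2.
set a := A i j in R1 R2 *; set b := A j i in R1 R2 *.
have RX : a + b \is Num.real.
  have -> : a + b = (A i i + 1 * a + 1^* * b + 1^* * 1 * A j j) - A i i - A j j.
    by rewrite rmorph1; ring.
  by rewrite !rpredB.
have RY : 'i * (a - b) \is Num.real.
  have -> : 'i * (a - b) = (A i i + 'i * a + 'i^* * b + 'i^* * 'i * A j j) - A i i - A j j.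
    rewrite conjCi. have h : 'i * 'i = -1 :> C by rewrite -expr2 sqrCi.
    rewrite [- 'i * 'i]mulNr h opprK mul1r; ring.
  by rewrite !rpredB.
have cX := conj_Creal RX; have cY := conj_Creal RY.
rewrite rmorphM rmorphB /= in cY. rewrite conjCi in cY.
rewrite rmorphD /= in cX.
have E : 'i * (2%:R * (b - a^*)) = ((-'i)*(a^*-b^*) - 'i*(a-b)) - 'i * ((a^*+b^*)-(a+b)) by ring.
rewrite cY cX !subrr mulr0 subrr in E.
move/eqP: E; rewrite mulf_eq0 (negbTE (neq0Ci C)) /= mulf_eq0 pnatr_eq0 /= subr_eq0 => /eqP eb.
by rewrite eb conjCK.
Qed.
Lemma psd_hermsym n (S : 'M[C]_n) : psd S -> S \is hermsymmx.
Proof.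
move=> H; apply/is_hermitianmxP; rewrite expr0 scale1r.
by apply/matrixP=> i j; rewrite !mxE psd_herm.
Qed.

Lemma tr_psd_ge0 n (M S : 'M[C]_n) : psd M -> psd S -> 0 <= \tr (M *m S).
Proof.
move=> HM HS.
have /hermitian_normalmx /orthomx_spectralP SE := psd_hermsym HS.
set P := spectralmx S in SE; set d := spectral_diag S in SE.
have Pu : P \is unitarymx by exact: spectral_unitarymx.
have PP : P *m adj P = 1%:M by exact/unitarymxP.
rewrite invmx_unitary // in SE.
have DE : diag_mx d = adj (adj P) *m S *m adj P.
  by rewrite adjK SE !mulmxA PP mul1mx -mulmxA PP mulmx1.
have HD : psd (diag_mx d) by rewrite DE; exact: psd_conj.
have HX : psd (adj (adj P) *m M *m adj P) by exact: psd_conj.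
rewrite SE !mulmxA mxtrace_mulC !mulmxA -{1}(adjK P) mul_mx_diag /mxtrace.
apply: sumr_ge0 => i _; rewrite mxE; apply: mulr_ge0; first exact: psd_diag.
by have := psd_diag i HD; rewrite mxE eqxx mulr1n.
Qed.
Lemma psd0 n : psd (0 : 'M[C]_n).
Proof. by apply/psdE=> v; rewrite mulmx0 mul0mx mxE. Qed.

Lemma psdD n (A B : 'M[C]_n) : psd A -> psd B -> psd (A + B).
Proof.
move=> /psdE HA /psdE HB; apply/psdE=> v.
by rewrite mulmxDr mulmxDl mxE addr_ge0.
Qed.

Lemma psdZ n c (A : 'M[C]_n) : 0 <= c -> psd A -> psd (c *: A).
Proof.
move=> c0 /psdE HA; apply/psdE=> v.
by rewrite -scalemxAr -scalemxAl mxE mulr_ge0.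
Qed.

Lemma psd_sum n m (F : 'I_m -> 'M[C]_n) : (forall l, psd (F l)) -> psd (\sum_l F l).
Proof.
move=> H; apply: (big_ind (fun X => psd X)) => //; [exact: psd0 | exact: psdD].
Qed.

Lemma ampl_sum dC dB k m (F : 'I_m -> 'M[C]_dC -> 'M[C]_dB) (Y : 'M[C]_(dC * k)) :
  ampl (fun X => \sum_l F l X) Y = \sum_l ampl (F l) Y.
Proof.
by apply/matrixP=> i j; rewrite !mxE !summxE; apply: eq_bigr => l _; rewrite mxE.
Qed.

Lemma ampl_scale dC dB k c (f : 'M[C]_dC -> 'M[C]_dB) (Y : 'M[C]_(dC * k)) :
  ampl (fun X => c *: f X) Y = c *: ampl f Y.
Proof. by apply/matrixP=> i j; rewrite !mxE. Qed.

Lemma sum_tens m n (F : 'I_(m * n) -> C) :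
  \sum_k F k = \sum_(a < m) \sum_(b < n) F (mxtens_index (a, b)).
Proof.
rewrite pair_big /=.
rewrite (reindex (@mxtens_index m n)) /=; last first.
  by apply: onW_bij; exists (@mxtens_unindex m n); [exact: mxtens_indexK | exact: mxtens_unindexK].
by apply: eq_bigr => -[a b].
Qed.

Lemma tr_ptrA dA dB (Y : 'M[C]_(dA * dB)) : \tr (ptrA Y) = \tr Y.
Proof.
rewrite /mxtrace sum_tens exchange_big /=.
by apply: eq_bigr => b _; rewrite mxE.
Qed.

Lemma ptrA_tens dA dB (A : 'M[C]_dA) (B : 'M[C]_dB) : ptrA (A *t B) = \tr A *: B.
Proof.
apply/matrixP=> i j; rewrite !mxE /mxtrace mulr_suml.
by apply: eq_bigr => a _; rewrite tensmxE.
Qed.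

Lemma ptrA_sum dA dB m (F : 'I_m -> 'M[C]_(dA * dB)) : ptrA (\sum_l F l) = \sum_l ptrA (F l).
Proof.
apply/matrixP=> i j; rewrite !mxE summxE.
under eq_bigr => a _ do rewrite summxE.
by rewrite exchange_big; apply: eq_bigr => l _; rewrite !mxE.
Qed.
Lemma CPmap_comb dC dB m (L : 'I_m -> 'M[C]_dC -> 'M[C]_dB) (c : 'I_m -> C) :
  (forall l, CPmap (L l)) -> (forall l, 0 <= c l) ->
  CPmap (fun X => \sum_l c l *: L l X).
Proof.
move=> HL Hc; split.
  move=> a u v /=; rewrite scaler_sumr -big_split /=; apply: eq_bigr => l _.
  by rewrite (proj1 (HL l)) scalerDr !scalerA mulrC.
move=> k Y HY; rewrite ampl_sum; apply: psd_sum => l.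
by rewrite ampl_scale; apply: psdZ => //; apply: (proj2 (HL l)).
Qed.

Lemma induced_formula dC dA dB na nx m (M : 'I_na -> 'I_nx -> 'M[C]_dA)
  (Lab : 'M[C]_dC -> 'M[C]_(dA * dB)) (L : 'I_m -> 'M[C]_dC -> 'M[C]_dB)
  (sig : 'I_m -> 'M[C]_dA) :
  (forall X, Lab X = \sum_l (sig l *t L l X)) ->
  forall a x X, induced M Lab a x X = \sum_l \tr (M a x *m sig l) *: L l X.
Proof.
move=> LabE a x X; rewrite /induced LabE mulmx_sumr ptrA_sum.
by apply: eq_bigr => l _; rewrite tensmx_mul mul1mx ptrA_tens.
Qed.

Lemma part1 dC dB (Lam : 'M[C]_dC -> 'M[C]_dB) dA (Lab : 'M[C]_dC -> 'M[C]_(dA * dB)) :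
  incoherent_extension Lab Lam ->
  forall (na nx : nat) (M : 'I_na -> 'I_nx -> 'M[C]_dA),
    meas_assemblage M ->
    channel_assemblage Lam (induced M Lab) /\ unsteerable (induced M Lab).
Proof.
move=> [[chLab ptrE] [m [L [sig [instL dens LabE]]]]] na nx M [Mpsd Msum].
have IF := induced_formula M LabE.
have p0 a x l : 0 <= \tr (M a x *m sig l) by apply: tr_psd_ge0 => //; case: (dens l).
have p1 x l : \sum_(a < na) \tr (M a x *m sig l) = 1.
  by rewrite -raddf_sum /= -mulmx_suml Msum mul1mx; case: (dens l).
have LamE X : Lam X = \sum_l L l X.
  rewrite -ptrE LabE ptrA_sum; apply: eq_bigr => l _.
  by rewrite ptrA_tens; case: (dens l) => _ ->; rewrite scale1r.
split; last first.
  exists m, L, (fun a x l => \tr (M a x *m sig l)); split => //.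
split.
  move=> a x.
  have -> : induced M Lab a x = (fun X => \sum_l \tr (M a x *m sig l) *: L l X).
    by apply: functional_extensionality => X; exact: IF.
  apply: CPmap_comb => // l; exact: (proj1 instL).
move=> x X; rewrite LamE.
under eq_bigr => a _ do rewrite IF.
rewrite exchange_big /=; apply: eq_bigr => l _.
by rewrite -scaler_suml p1 scale1r.
Qed.
Lemma sum_ind n (F : 'I_n -> C) (c : 'I_n) (g : C) :
  \sum_t F t * ((t == c)%:R * g) = F c * g.
Proof.
rewrite (bigD1 c) //= eqxx mul1r big1 ?addr0 // => t /negbTE ->.
by rewrite mul0r mulr0.
Qed.

Lemma sum_ind2 n (F : 'I_n -> C) (c : 'I_n) (g : C) :
  \sum_t ((t == c)%:R * g) * F t = g * F c.
Proof.
rewrite (bigD1 c) //= eqxx mul1r big1 ?addr0 // => t /negbTE ->.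
by rewrite !mul0r.
Qed.

Lemma psd_diag_mx n (d : 'rV[C]_n) : (forall i, 0 <= d 0 i) -> psd (diag_mx d).
Proof.
move=> Hd; apply/psdE=> v; rewrite mul_mx_diag !mxE.
apply: sumr_ge0 => i _; rewrite !mxE -mulrA mulrC -mulrA.
by apply: mulr_ge0 => //; rewrite ?mul_conjC_ge0 // mulrC mul_conjC_ge0.
Qed.

Lemma delta_diag n (l : 'I_n) : (delta_mx l l : 'M[C]_n) = diag_mx (delta_mx 0 l).
Proof.
apply/matrixP=> i j; rewrite !mxE.
case: (eqVneq i j) => [->|ne]; first by rewrite andbb mulr1n.
rewrite mulr0n; case: (eqVneq i l) => [eil|] //=.
by rewrite eil eq_sym in ne; rewrite (negbTE ne).
Qed.

Lemma density_delta n (l : 'I_n) : density (delta_mx l l : 'M[C]_n).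
Proof.
split; first by rewrite delta_diag; apply: psd_diag_mx => i; rewrite mxE ler0n.
rewrite /mxtrace (bigD1 l) //= mxE !eqxx /= big1 ?addr0 // => i /negbTE ne.
by rewrite mxE; move: ne => /= ->.
Qed.

Lemma tr_diag_delta n (d : 'rV[C]_n) l : \tr (diag_mx d *m delta_mx l l) = d 0 l.
Proof.
rewrite mul_diag_mx /mxtrace (bigD1 l) //= !mxE !eqxx /= mulr1 big1 ?addr0 // => i /negbTE ne.
by rewrite !mxE; move: ne => /= ->; rewrite mulr0.
Qed.

Lemma tensmx_linr m n p q (A : 'M[C]_(m, n)) a (B1 B2 : 'M[C]_(p, q)) :
  A *t (a *: B1 + B2) = a *: (A *t B1) + A *t B2.
Proof.
apply/matrixP=> i j; case: i / mxtens_indexP => i1 i2; case: j / mxtens_indexP => j1 j2.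
rewrite tensmxE [in RHS]mxE [(a *: (A *t B1)) _ _]mxE !tensmxE.
by rewrite !mxE mulrDr mulrCA.
Qed.

Definition Esel m dB k (l : 'I_m) : 'M[C]_(dB * k, (m * dB) * k) :=
  \matrix_(s, t) ((s == mxtens_index ((mxtens_unindex (mxtens_unindex t).1).2,
                                       (mxtens_unindex t).2))%:R
                  * ((mxtens_unindex (mxtens_unindex t).1).1 == l)%:R).

Lemma ampl_delta dC dB k m (l : 'I_m) (L : 'M[C]_dC -> 'M[C]_dB) (Y : 'M[C]_(dC * k)) :
  ampl (fun X => (delta_mx l l : 'M[C]_m) *t L X) Y
  = adj (Esel dB k l) *m ampl L Y *m Esel dB k l.
Proof.
apply/matrixP=> i j.
case: i / mxtens_indexP => i1 kk; case: i1 / mxtens_indexP => a b.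
case: j / mxtens_indexP => j1 kk'; case: j1 / mxtens_indexP => a' b'.
rewrite [in RHS]mxE.
under eq_bigr => t _ do rewrite [Esel _ _ _ t _]mxE !mxtens_indexK /=.
rewrite sum_ind [in RHS]mxE.
under eq_bigr => s _ do rewrite [adj _ _ _]mxE [(Esel _ _ _)^T _ _]mxE [Esel _ _ _ _ _]mxE !mxtens_indexK /= rmorphM !rmorph_nat.
rewrite sum_ind2 /ampl [LHS]mxE [in RHS]mxE !mxtens_indexK /= tensmxE [delta_mx _ _ _ _]mxE.
by case: (a == l); case: (a' == l); rewrite /= ?mul1r ?mulr1 ?mul0r ?mulr0.
Qed.
Lemma construct dC dB (Lam : 'M[C]_dC -> 'M[C]_dB) m (L : 'I_m -> 'M[C]_dC -> 'M[C]_dB)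
  na nx (p : 'I_na -> 'I_nx -> 'I_m -> C) :
  instrument L -> (forall X, \sum_l L l X = Lam X) ->
  (forall a x l, 0 <= p a x l) -> (forall x l, \sum_a p a x l = 1) ->
  exists dA (Lab : 'M[C]_dC -> 'M[C]_(dA * dB)) (M : 'I_na -> 'I_nx -> 'M[C]_dA),
    [/\ incoherent_extension Lab Lam, meas_assemblage M &
        forall a x X, induced M Lab a x X = \sum_l p a x l *: L l X].
Proof.
move=> [HL chL] LsE p0 p1.
pose sig l := (delta_mx l l : 'M[C]_m).
pose Lab X := \sum_l (sig l *t L l X).
pose M a x := diag_mx (\row_l p a x l).
exists m, Lab, M.
have ptrE X : ptrA (Lab X) = Lam X.
  rewrite ptrA_sum -LsE; apply: eq_bigr => l _.
  by rewrite ptrA_tens (proj2 (density_delta l)) scale1r.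
split.
- split; last first.
    by exists m, L, sig; split => //; exact: density_delta.
  split; last exact: ptrE.
  split; last first.
    by move=> X; rewrite -tr_ptrA ptrE -LsE; exact: (proj2 chL X).
  split.
    move=> c u v; rewrite /Lab scaler_sumr -big_split; apply: eq_bigr => l _ /=.
    by rewrite (proj1 (HL l)) tensmx_linr.
  move=> k Y HY; rewrite /Lab ampl_sum; apply: psd_sum => l.
  by rewrite ampl_delta; apply: psd_conj; apply: (proj2 (HL l)).
- split.
    by move=> a x; apply: psd_diag_mx => i; rewrite mxE.
  move=> x; apply/matrixP=> i j; rewrite summxE !mxE.
  under eq_bigr => a _ do rewrite !mxE.
by rewrite sumrMnl p1.
- move=> a x X; rewrite (@induced_formula _ _ _ _ _ _ M Lab L sig (fun X => erefl)).
  by apply: eq_bigr => l _; rewrite tr_diag_delta mxE.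
Qed.

Lemma part2 dC dB (Lam : 'M[C]_dC -> 'M[C]_dB) : channel Lam ->
  forall (na nx : nat) (La : 'I_na -> 'I_nx -> 'M[C]_dC -> 'M[C]_dB),
     channel_assemblage Lam La -> unsteerable La ->
     exists (dA : nat) (Lab : 'M[C]_dC -> 'M[C]_(dA * dB))
            (M : 'I_na -> 'I_nx -> 'M[C]_dA),
       [/\ incoherent_extension Lab Lam, meas_assemblage M &
           forall a x X, La a x X = induced M Lab a x X].
Proof.
move=> HLam na [|nx] La [CPLa sumLa] [m [L [p [instL p0 p1 LaE]]]].
  have inst1 : instrument (fun _ : 'I_1 => Lam).
    split; first by move=> _; exact: (proj1 HLam).
    have -> : (fun X => \sum_(l < 1) Lam X) = Lam.
      by apply: functional_extensionality => X; rewrite big_ord1.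
    exact: HLam.
  have [dA [Lab [M [H1 H2 H3]]]] :=
    @construct _ _ Lam 1 (fun _ => Lam) na 0 (fun _ _ _ => 1) inst1
      (fun X => big_ord1 _ (fun _ => Lam X)) (fun _ _ _ => ler01) (fun x => match x with Ordinal _ H => False_ind _ (notF H) end).
  by exists dA, Lab, M; split => // a [].
have LsE X : \sum_l L l X = Lam X.
  rewrite -(sumLa ord0 X); under [RHS]eq_bigr => a _ do rewrite LaE.
  rewrite exchange_big /=; apply: eq_bigr => l _.
  by rewrite -scaler_suml p1 scale1r.
have [dA [Lab [M [H1 H2 H3]]]] := construct instL LsE p0 p1.
by exists dA, Lab, M; split => // a x X; rewrite H3 LaE.
Qed.
End Q.

Theorem proposition1 (C : numClosedFieldType) (dC dB : nat)
  (Lam : 'M[C]_dC -> 'M[C]_dB) (HLam : channel Lam) :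
  (forall (dA : nat) (Lab : 'M[C]_dC -> 'M[C]_(dA * dB)),
     incoherent_extension Lab Lam ->
     forall (na nx : nat) (M : 'I_na -> 'I_nx -> 'M[C]_dA),
       meas_assemblage M ->
       channel_assemblage Lam (induced M Lab) /\ unsteerable (induced M Lab))
  /\
  (forall (na nx : nat) (La : 'I_na -> 'I_nx -> 'M[C]_dC -> 'M[C]_dB),
     channel_assemblage Lam La -> unsteerable La ->
     exists (dA : nat) (Lab : 'M[C]_dC -> 'M[C]_(dA * dB))
            (M : 'I_na -> 'I_nx -> 'M[C]_dA),
       [/\ incoherent_extension Lab Lam, meas_assemblage M &
           forall a x X, La a x X = induced M Lab a x X]).
Proof.
split; first by move=> dA Lab; exact: part1.
exact: part2.
Qed.
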